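(* Let $H\in M_d$ be a Hamiltonian, $\beta>0$, $\epsilon>0$, and let $\{e_1,\dots,e_{d'}\}\subset\mathbb R$ be an $\epsilon$-spectral covering of $H$. For $i\in[d']$ let $\tilde P_i$ be the orthogonal projection onto the span of the eigenvectors of $H$ with eigenvalues in $(e_i-\epsilon,e_i+\epsilon)$, and let $n_i=\operatorname{tr}\tilde P_i$. Define $$\tilde{\mathcal Z}_\beta=\sum_{i=1}^{d'}n_i e^{-\beta e_i},\qquad \tilde\rho=\frac{1}{\tilde{\mathcal Z}_\beta}\sum_{i=1}^{d'}e^{-\beta e_i}\tilde P_i .$$ Then $$\Big\|\tilde\rho-\frac{e^{-\beta H}}{\mathcal Z_\beta}\Big\|_1\le\sqrt{4\epsilon\beta}.$$ Consequently, for any POVM $\{F_k\}_{k\in I}$, the distributions $p(k)=\operatorname{tr}(F_k e^{-\beta H}/\mathcal Z_\beta)$ and $\tilde p(k)=\operatorname{tr}(F_k\tilde\rho)$ satisfy $\|\tilde p-p\|_1=\sum_k|\tilde p(k)-p(k)|\le\sqrt{4\epsilon\beta}$.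
   Context: $\mathcal Z_\beta=\operatorname{tr}[e^{-\beta H}]$. For $\epsilon>0$, a set $\{e_1,\dots,e_{d'}\}\subset\mathbb R$ is an $\epsilon$-spectral covering of a Hamiltonian (Hermitian matrix) $H$ if the spectrum $\sigma(H)$ is contained in the disjoint union $\bigsqcup_{i=1}^{d'}(e_i-\epsilon,e_i+\epsilon)$ (the intervals being pairwise disjoint) and $\sigma(H)\cap(e_i-\epsilon,e_i+\epsilon)\neq\emptyset$ for each $i$. $\|X\|_1=\operatorname{tr}|X|$ is the trace norm. A POVM is a family of positive semidefinite matrices $\{F_k\}_{k\in I}$ with $\sum_k F_k=\mathbf 1$. *)

(* Defs.v *)
(* classical reals, hand-rolled complex numbers and d x d complex
   matrices (indices 0..d-1; entries outside the range are irrelevant). *)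
From Stdlib Require Import Reals Lra List ClassicalEpsilon Factorial.
Open Scope R_scope.

Record C := mkC { Re : R ; Im : R }.
Definition RtoC (x : R) : C := mkC x 0.
Definition C0 : C := RtoC 0.
Definition C1 : C := RtoC 1.
Definition Cadd (a b : C) : C := mkC (Re a + Re b) (Im a + Im b).
Definition Copp (a : C) : C := mkC (- Re a) (- Im a).
Definition Csub (a b : C) : C := Cadd a (Copp b).
Definition Cmul (a b : C) : C :=
  mkC (Re a * Re b - Im a * Im b) (Re a * Im b + Im a * Re b).
Definition Cconj (a : C) : C := mkC (Re a) (- Im a).
Definition Cmod (a : C) : R := sqrt (Re a * Re a + Im a * Im a).

Fixpoint Csum (n : nat) (f : nat -> C) : C :=
  match n with O => C0 | S m => Cadd (Csum m f) (f m) end.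
Fixpoint Rsum (n : nat) (f : nat -> R) : R :=
  match n with O => 0 | S m => Rsum m f + f m end.

Definition Vec := nat -> C.
Definition Mat := nat -> nat -> C.

Definition veq (d : nat) (v w : Vec) : Prop := forall i, (i < d)%nat -> v i = w i.
Definition meq (d : nat) (A B : Mat) : Prop :=
  forall i j, (i < d)%nat -> (j < d)%nat -> A i j = B i j.

Definition mzero : Mat := fun _ _ => C0.
Definition mid : Mat := fun i j => if Nat.eqb i j then C1 else C0.
Definition madd (A B : Mat) : Mat := fun i j => Cadd (A i j) (B i j).
Definition msub (A B : Mat) : Mat := fun i j => Csub (A i j) (B i j).
Definition mscale (c : C) (A : Mat) : Mat := fun i j => Cmul c (A i j).
Definition mmul (d : nat) (A B : Mat) : Mat :=
  fun i j => Csum d (fun k => Cmul (A i k) (B k j)).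
Definition madj (A : Mat) : Mat := fun i j => Cconj (A j i).
Definition mtrace (d : nat) (A : Mat) : C := Csum d (fun i => A i i).
Definition mapply (d : nat) (A : Mat) (v : Vec) : Vec :=
  fun i => Csum d (fun k => Cmul (A i k) (v k)).
Definition vdot (d : nat) (v w : Vec) : C := Csum d (fun i => Cmul (Cconj (v i)) (w i)).
Fixpoint msumn (n : nat) (f : nat -> Mat) : Mat :=
  match n with O => mzero | S m => madd (msumn m f) (f m) end.

Definition hermitian (d : nat) (A : Mat) : Prop := meq d (madj A) A.
Definition psd (d : nat) (A : Mat) : Prop :=
  hermitian d A /\ forall v : Vec, 0 <= Re (vdot d v (mapply d A v)).

Fixpoint mpow (d : nat) (A : Mat) (k : nat) : Mat :=
  match k with O => mid | S m => mmul d (mpow d A m) A end.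
Definition exp_partial (d : nat) (A : Mat) (N : nat) : Mat :=
  msumn (S N) (fun k => mscale (RtoC (/ INR (fact k))) (mpow d A k)).
Definition is_mexp (d : nat) (A M : Mat) : Prop :=
  forall i j, (i < d)%nat -> (j < d)%nat ->
    Un_cv (fun N => Re (exp_partial d A N i j)) (Re (M i j)) /\
    Un_cv (fun N => Im (exp_partial d A N i j)) (Im (M i j)).
Definition mexp (d : nat) (A : Mat) : Mat :=
  epsilon (inhabits mzero) (is_mexp d A).

Definition mabs (d : nat) (X : Mat) : Mat :=
  epsilon (inhabits mzero)
    (fun Y => psd d Y /\ meq d (mmul d Y Y) (mmul d (madj X) X)).
Definition trace_norm (d : nat) (X : Mat) : R := Re (mtrace d (mabs d X)).

Definition partition_fn (d : nat) (beta : R) (H : Mat) : R :=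
  Re (mtrace d (mexp d (mscale (RtoC (- beta)) H))).
Definition gibbs (d : nat) (beta : R) (H : Mat) : Mat :=
  mscale (RtoC (/ partition_fn d beta H)) (mexp d (mscale (RtoC (- beta)) H)).

Definition eigenvalue (d : nat) (H : Mat) (lam : C) : Prop :=
  exists v : Vec, (exists i, (i < d)%nat /\ v i <> C0) /\
                  veq d (mapply d H v) (fun i => Cmul lam (v i)).

Definition in_interval (a b : R) (lam : C) : Prop :=
  Im lam = 0 /\ a < Re lam < b.

Definition spectral_covering (d : nat) (H : Mat) (eps : R) (d' : nat) (e : nat -> R) : Prop :=
  (forall lam, eigenvalue d H lam ->
     exists i, (i < d')%nat /\ in_interval (e i - eps) (e i + eps) lam) /\
  (forall i j, (i < d')%nat -> (j < d')%nat -> i <> j ->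
     forall x : R, ~ ((e i - eps < x < e i + eps) /\ (e j - eps < x < e j + eps))) /\
  (forall i, (i < d')%nat ->
     exists lam, eigenvalue d H lam /\ in_interval (e i - eps) (e i + eps) lam).

Definition in_eigen_span (d : nat) (H : Mat) (a b : R) (v : Vec) : Prop :=
  exists l : list (C * Vec),
    (forall p, In p l -> in_interval a b (fst p) /\
        veq d (mapply d H (snd p)) (fun i => Cmul (fst p) (snd p i))) /\
    veq d v (fun i => fold_right (fun p acc => Cadd (snd p i) acc) C0 l).

Definition orth_proj_onto (d : nat) (P : Mat) (S : Vec -> Prop) : Prop :=
  hermitian d P /\ meq d (mmul d P P) P /\
  forall v : Vec, S v <-> veq d (mapply d P v) v.

Definition povm (d m : nat) (F : nat -> Mat) : Prop :=
  (forall k, (k < m)%nat -> psd d (F k)) /\ meq d (msumn m F) mid.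

(* Main.v *)
Require Import Defs.
From Stdlib Require Import Reals Lra Psatz List ClassicalEpsilon Factorial Classical.
Open Scope R_scope.

Lemma poly_h s : 0 <= s <= 1 -> 0 <= 2 - 2*s - 2*s^2 + 3/2*s^3 + 3/2*s^4 - 1/2*s^5 - 1/2*s^6 + 1/16*s^7 + 1/16*s^8.
Proof.
intros Hs.
assert (0 <= s^5) by (apply pow_le; lra).
assert (s^6 <= s^5) by (simpl; nra).
assert (0 <= s^7) by (apply pow_le; lra).
assert (s^5 <= s^4) by (simpl; nra).
assert (0 <= s^8) by (apply pow_le; lra).
assert (s^4 <= s^3) by (simpl; nra).
assert (0 <= s^3) by (apply pow_le; lra).
nra.
Qed.

Lemma poly_ineq s : 0 <= s <= 1 ->
  1 - s <= (1 + s) * ((1 - s*s/2) * (1 - s*s/2) * (1 - s*s/2) * (1 - s*s/2)).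
Proof.
intros Hs. pose proof (poly_h s Hs) as H.
assert (E : (1 + s) * ((1 - s*s/2) * (1 - s*s/2) * (1 - s*s/2) * (1 - s*s/2)) - (1 - s) =
  s * (2 - 2*s - 2*s^2 + 3/2*s^3 + 3/2*s^4 - 1/2*s^5 - 1/2*s^6 + 1/16*s^7 + 1/16*s^8)) by field.
assert (0 <= s * (2 - 2*s - 2*s^2 + 3/2*s^3 + 3/2*s^4 - 1/2*s^5 - 1/2*s^6 + 1/16*s^7 + 1/16*s^8)).
{ apply Rmult_le_pos; lra. }
lra.
Qed.

Lemma exp_one_minus y : exp y * (1 - y) <= 1.
Proof.
pose proof (exp_ineq1_le (- y)) as H.
assert (E : exp y * exp (- y) = 1) by (rewrite <- exp_plus; replace (y + - y) with 0 by ring; apply exp_0).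
pose proof (exp_pos y).
nra.
Qed.

Lemma key_exp w s : 0 <= s <= 1 -> w <= 2*s*s -> exp w * (1 - s) <= 1 + s.
Proof.
intros Hs Hw.
set (E := exp (s*s/2)). set (q := 1 - s*s/2).
assert (HE : E * q <= 1) by (apply exp_one_minus).
assert (HEp : 0 < E) by apply exp_pos.
assert (Hq : 1/2 <= q <= 1) by (unfold q; nra).
assert (H4 : exp w <= E * E * E * E).
{ unfold E. rewrite <- !exp_plus.
  destruct (Rle_lt_or_eq_dec _ _ Hw) as [h|h].
  - left. apply exp_increasing. lra.
  - right. f_equal. lra. }
pose proof (poly_ineq s Hs) as HP. fold q in HP.
assert (HEq : 0 <= E * q) by nra.
assert (H2 : (E*q)*(E*q) <= 1) by nra.
assert (H3 : (E*q)*(E*q)*((E*q)*(E*q)) <= 1) by nra.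
assert (exp w * (1 - s) <= E*E*E*E * (1 - s)) by (apply Rmult_le_compat_r; lra).
assert (E*E*E*E * (1 - s) <= E*E*E*E * ((1+s) * (q*q*q*q))).
{ apply Rmult_le_compat_l; [nra | lra]. }
assert (E*E*E*E * ((1+s) * (q*q*q*q)) = (E*q)*(E*q)*((E*q)*(E*q)) * (1 + s)) by ring.
nra.
Qed.

Lemma pair_bound_le u v t : 0 < t -> Rabs u < t -> Rabs v < t -> v <= u ->
  Rabs (exp u - exp v) <= Rmin (sqrt t) 1 * (exp u + exp v).
Proof.
intros ht hu hv hvu.
pose proof (exp_pos u). pose proof (exp_pos v).
assert (hle : exp v <= exp u) by (destruct (Rle_lt_or_eq_dec _ _ hvu) as [h|h];
  [left; apply exp_increasing; exact h | right; rewrite h; reflexivity]).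
rewrite Rabs_pos_eq by lra.
destruct (Rle_dec t 1) as [h1|h1].
- assert (hs : 0 <= sqrt t <= 1).
  { split. apply sqrt_pos. rewrite <- sqrt_1. apply sqrt_le_1_alt. exact h1. }
  rewrite Rmin_left by lra.
  assert (hss : sqrt t * sqrt t = t) by (apply sqrt_sqrt; lra).
  apply Rabs_def2 in hu. apply Rabs_def2 in hv.
  assert (hw : u - v <= 2 * sqrt t * sqrt t) by nra.
  pose proof (key_exp (u - v) (sqrt t) hs hw) as K.
  assert (E : exp u = exp (u - v) * exp v) by (rewrite <- exp_plus; f_equal; ring).
  rewrite E. nra.
- rewrite Rmin_right.
  + lra.
  + assert (1 < t) by lra. rewrite <- sqrt_1. left. apply sqrt_lt_1_alt. lra.
Qed.

Lemma pair_bound u v t : 0 < t -> Rabs u < t -> Rabs v < t ->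
  Rabs (exp u - exp v) <= Rmin (sqrt t) 1 * (exp u + exp v).
Proof.
intros ht hu hv. destruct (Rle_dec v u) as [h|h].
- apply pair_bound_le; auto.
- rewrite Rabs_minus_sym, Rplus_comm. apply pair_bound_le; auto. lra.
Qed.

Lemma rmin_le t : 0 < t -> Rmin (sqrt t) 1 <= sqrt t.
Proof. intros; apply Rmin_l. Qed.

Lemma pair_c u v t c : 0 < t -> Rabs u < t -> Rabs v < t -> 0 < c ->
  Rabs (c * exp u - c * exp v) <= Rmin (sqrt t) 1 * (c * exp u + c * exp v).
Proof.
intros ht hu hv hc.
pose proof (pair_bound u v t ht hu hv) as h.
replace (c * exp u - c * exp v) with (c * (exp u - exp v)) by ring.
rewrite Rabs_mult, (Rabs_pos_eq c) by lra.
replace (Rmin (sqrt t) 1 * (c * exp u + c * exp v)) with (c * (Rmin (sqrt t) 1 * (exp u + exp v))) by ring.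
apply Rmult_le_compat_l; lra.
Qed.

Lemma pair_exp cj gj ck gk t : 0 < t -> Rabs (cj - gj) < t -> Rabs (ck - gk) < t ->
  Rabs (exp cj * exp gk - exp gj * exp ck) <= Rmin (sqrt t) 1 * (exp cj * exp gk + exp gj * exp ck).
Proof.
intros ht h1 h2.
assert (E1 : exp cj * exp gk = exp (gj + gk) * exp (cj - gj)) by (rewrite <- !exp_plus; f_equal; ring).
assert (E2 : exp gj * exp ck = exp (gj + gk) * exp (ck - gk)) by (rewrite <- !exp_plus; f_equal; ring).
rewrite E1, E2. apply pair_c; auto. apply exp_pos.
Qed.

Lemma div_sub_eq b a B A : A <> 0 -> B <> 0 -> b / B - a / A = (b * A - a * B) / (A * B).
Proof. intros; field; auto. Qed.

Lemma two_s_le t : 0 < t -> 2 * Rmin (sqrt t) 1 <= 2 * sqrt t.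
Proof. intros; pose proof (Rmin_l (sqrt t) 1); lra. Qed.

Lemma twosqrt_ge0 t : 0 <= 2 * sqrt t.
Proof. pose proof (sqrt_pos t); lra. Qed.

Lemma Rmin_sq_ge0 t : 0 < t -> 0 <= Rmin (sqrt t) 1.
Proof. intros; apply Rmin_glb; [apply sqrt_pos | lra]. Qed.

Lemma scale_bound beta eps c l : 0 < beta -> Rabs (c - l) < eps ->
  Rabs (- beta * c - - beta * l) < beta * eps.
Proof.
intros hb h.
replace (- beta * c - - beta * l) with (- beta * (c - l)) by ring.
rewrite Rabs_mult, Rabs_Ropp, (Rabs_pos_eq beta) by lra.
apply Rmult_lt_compat_l; lra.
Qed.

Lemma sqrt4 eps beta : 0 < eps -> 0 < beta -> 2 * sqrt (beta * eps) = sqrt (4 * eps * beta).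
Proof.
intros he hb.
replace (4 * eps * beta) with ((2 * 2) * (beta * eps)) by ring.
rewrite (sqrt_mult (2*2) (beta*eps)) by nra. rewrite (sqrt_square 2) by lra. reflexivity.
Qed.

Lemma tpos eps beta : 0 < eps -> 0 < beta -> 0 < beta * eps.
Proof. intros; nra. Qed.

Lemma abs_lt_of x l eps : x - eps < l -> l < x + eps -> Rabs (x - l) < eps.
Proof. intros; apply Rabs_def1; lra. Qed.

Lemma sqrt4' eps beta : 0 < eps -> 0 < beta -> (1 + 1) * sqrt (beta * eps) = sqrt (4 * eps * beta).
Proof. intros; rewrite <- sqrt4 by auto. f_equal; ring. Qed.

From mathcomp Require Import all_boot all_order all_algebra complex Rstruct.
From mathcomp Require Import sesquilinear spectral.
Import GRing.Theory Num.Theory Num.Def Order.TTheory.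
Set Implicit Arguments. Unset Strict Implicit. Unset Printing Implicit Defensive.
Local Open Scope ring_scope.
Local Open Scope sesquilinear_scope.

Notation CC := (complex R).
Definition toC (z : Defs.C) : CC := Complex (Defs.Re z) (Defs.Im z).
Definition ofC (z : CC) : Defs.C := mkC (complex.Re z) (complex.Im z).
Lemma toCK : cancel toC ofC. Proof. by case. Qed.
Lemma ofCK : cancel ofC toC. Proof. by case. Qed.
Lemma toC_inj : injective toC. Proof. exact: can_inj toCK. Qed.
Lemma toC_add a b : toC (Cadd a b) = toC a + toC b. Proof. by case: a; case: b. Qed.
Lemma toC_mul a b : toC (Cmul a b) = toC a * toC b. Proof. by case: a; case: b. Qed.
Lemma toC_conj a : toC (Cconj a) = conjC (toC a). Proof. by case: a. Qed.
Lemma toC_opp a : toC (Copp a) = - toC a. Proof. by case: a. Qed.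
Lemma toC_sub a b : toC (Csub a b) = toC a - toC b. Proof. by case: a; case: b. Qed.
Lemma toC_C0 : toC Defs.C0 = 0. Proof. by []. Qed.
Lemma toC_C1 : toC Defs.C1 = 1. Proof. by []. Qed.
Lemma toC_RtoC r : toC (RtoC r) = (r%:C)%C. Proof. by []. Qed.

Lemma toC_Csum n f : toC (Csum n f) = \sum_(i < n) toC (f i).
Proof.
elim: n => [|n IH]; first by rewrite big_ord0.
by rewrite big_ord_recr /= toC_add IH.
Qed.

Lemma RsumE n f : Rsum n f = \sum_(i < n) f i.
Proof.
elim: n => [|n IH]; first by rewrite big_ord0.
by rewrite big_ord_recr /= IH.
Qed.

Definition M2mx d (A : Mat) : 'M[CC]_d := \matrix_(i < d, j < d) toC (A i j).
Definition V2cv d (v : Vec) : 'cV[CC]_d := \col_(i < d) toC (v i).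

Definition mx2M d (X : 'M[CC]_d) : Mat := fun i j =>
  match (insub i : option 'I_d), (insub j : option 'I_d) with
  | Some i', Some j' => ofC (X i' j') | _, _ => Defs.C0 end.
Definition cv2V d (x : 'cV[CC]_d) : Vec := fun i =>
  match (insub i : option 'I_d) with Some i' => ofC (x i' 0) | None => Defs.C0 end.

Arguments mx2M : clear implicits.
Arguments cv2V : clear implicits.

Lemma insub_ord d (i : 'I_d) : (insub (nat_of_ord i) : option 'I_d) = Some i.
Proof. exact: valK. Qed.

Lemma mx2MK d X : M2mx d (mx2M d X) = X.
Proof.
apply/matrixP => i j; rewrite mxE /mx2M.
by rewrite !insub_ord ofCK.
Qed.

Lemma cv2VK d x : V2cv d (cv2V d x) = x.
Proof.
apply/matrixP => i j; by rewrite mxE /cv2V insub_ord ofCK ord1.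
Qed.

Lemma ordlt d (i : 'I_d) : (i < d)%coq_nat. Proof. exact/ssrnat.ltP. Qed.
Lemma ltb i d : (i < d)%coq_nat -> (i < d)%N. Proof. by move/ssrnat.ltP. Qed.

Lemma meqP d A B : meq d A B <-> M2mx d A = M2mx d B.
Proof.
split.
  by move=> h; apply/matrixP => i j; rewrite !mxE (h _ _ (ordlt i) (ordlt j)).
move=> /matrixP h i j hi hj.
by have := h (Ordinal (ltb hi)) (Ordinal (ltb hj)); rewrite !mxE /= => /toC_inj.
Qed.

Lemma veqP d v w : veq d v w <-> V2cv d v = V2cv d w.
Proof.
split.
  by move=> h; apply/matrixP => i j; rewrite !mxE (h _ (ordlt i)).
move=> /matrixP h i hi.
by have := h (Ordinal (ltb hi)) 0; rewrite !mxE /= => /toC_inj.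
Qed.

Lemma M2mx_mul d A B : M2mx d (mmul d A B) = M2mx d A *m M2mx d B.
Proof.
apply/matrixP => i j; rewrite !mxE toC_Csum; apply: eq_bigr => k _.
by rewrite toC_mul !mxE.
Qed.

Lemma M2mx_add d A B : M2mx d (madd A B) = M2mx d A + M2mx d B.
Proof. by apply/matrixP => i j; rewrite !mxE toC_add. Qed.

Lemma M2mx_sub d A B : M2mx d (msub A B) = M2mx d A - M2mx d B.
Proof. by apply/matrixP => i j; rewrite !mxE toC_sub. Qed.

Lemma M2mx_scale d c A : M2mx d (mscale c A) = toC c *: M2mx d A.
Proof. by apply/matrixP => i j; rewrite !mxE toC_mul. Qed.

Lemma M2mx_adj d A : M2mx d (madj A) = (M2mx d A)^t*.
Proof. by apply/matrixP => i j; rewrite !mxE toC_conj. Qed.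

Lemma M2mx_zero d : M2mx d mzero = 0.
Proof. by apply/matrixP => i j; rewrite !mxE. Qed.

Lemma M2mx_id d : M2mx d mid = 1%:M.
Proof.
apply/matrixP => i j; rewrite !mxE /mid.
case: (Nat.eqb_spec i j) => [/val_inj ->|hne]; first by rewrite eqxx.
by case: eqP => // hij; case: hne; rewrite hij.
Qed.

Lemma M2mx_msumn d n f : M2mx d (msumn n f) = \sum_(k < n) M2mx d (f k).
Proof.
elim: n => [|n IH]; first by rewrite big_ord0 M2mx_zero.
by rewrite big_ord_recr /= M2mx_add IH.
Qed.

Lemma toC_trace d A : toC (mtrace d A) = \tr (M2mx d A).
Proof. by rewrite toC_Csum /mxtrace; apply: eq_bigr => i _; rewrite mxE. Qed.

Lemma V2cv_apply d A v : V2cv d (mapply d A v) = M2mx d A *m V2cv d v.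
Proof.
apply/matrixP => i j; rewrite !mxE toC_Csum; apply: eq_bigr => k _.
by rewrite toC_mul !mxE.
Qed.

Lemma toC_vdot d v w : toC (vdot d v w) = ((V2cv d v)^t* *m V2cv d w) 0 0.
Proof.
rewrite toC_Csum !mxE; apply: eq_bigr => k _.
by rewrite toC_mul toC_conj !mxE.
Qed.

Lemma adjM d (A B : 'M[CC]_d) : (A *m B)^t* = B^t* *m A^t*.
Proof. by rewrite trmx_mul map_mxM. Qed.
Lemma adjD d (A B : 'M[CC]_d) : (A + B)^t* = A^t* + B^t*.
Proof. by rewrite linearD /= map_mxD. Qed.
Lemma adjZ d c (A : 'M[CC]_d) : (c *: A)^t* = conjC c *: A^t*.
Proof. by rewrite linearZ /= map_mxZ. Qed.

Lemma conjC_real (r : R) : conjC ((r%:C)%C : CC) = (r%:C)%C.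
Proof. by change (Complex r (- 0) = Complex r 0); rewrite oppr0. Qed.

Lemma conj_eq_real (z : CC) : conjC z = z -> z = ((complex.Re z)%:C)%C.
Proof.
case: z => a b /= h. congr Complex.
have h' : Complex a (Ropp b) = Complex a b by exact: h.
case: h' => h2.
have hb : b = IZR 0 by lra.
exact: hb.
Qed.

Theorem spectral_herm d (X : 'M[CC]_d) : X^t* = X ->
  exists (P : 'M[CC]_d) (lam : 'I_d -> R),
    P *m P^t* = 1%:M /\ P^t* *m P = 1%:M /\
    X = P^t* *m diag_mx (\row_k ((lam k)%:C)%C) *m P.
Proof.
move=> hX.
have hn : X \is normalmx by apply/normalmxP; rewrite hX.
have /orthomx_spectralP hE := hn.
set P := spectralmx X in hE; set D := spectral_diag X in hE.
have PU : P \is unitarymx by apply: spectral_unitarymx.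
have PU1 : P *m P^t* = 1%:M by apply/unitarymxP.
have hinv : invmx P = P^t* by apply: invmx_unitary.
have PU2 : P^t* *m P = 1%:M by rewrite -hinv mulVmx // unitarymx_unit.
rewrite hinv in hE.
have hD : diag_mx D = P *m X *m P^t*.
  by rewrite hE !mulmxA PU1 mul1mx -!mulmxA PU1 mulmx1.
have hDa : (diag_mx D)^t* = diag_mx D.
  by rewrite hD !adjM trmxCK hX mulmxA.
exists P, (fun k => complex.Re (D 0 k)); split => //; split => //.
rewrite {1}hE; congr (_ *m diag_mx _ *m _); apply/matrixP => i k.
rewrite !mxE ord1; apply: conj_eq_real.
move/matrixP: hDa => /(_ k k); rewrite !mxE eqxx.
by rewrite /= !mulr1n.
Qed.

Section SF.
Variable d : nat.
Variable P : 'M[CC]_d.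
Hypothesis PU1 : P *m P^t* = 1%:M.
Hypothesis PU2 : P^t* *m P = 1%:M.

Definition SF (f : 'I_d -> CC) : 'M[CC]_d := P^t* *m diag_mx (\row_k f k) *m P.

Lemma SF_ext f g : (forall k, f k = g k) -> SF f = SF g.
Proof.
move=> h; rewrite /SF; congr (_ *m diag_mx _ *m _).
by apply/matrixP => i j; rewrite !mxE h.
Qed.

Lemma SF_mul f g : SF f *m SF g = SF (fun k => f k * g k).
Proof.
rewrite /SF -!mulmxA; congr (_ *m _); rewrite !mulmxA.
rewrite -[diag_mx _ *m P *m P^t*]mulmxA PU1 mulmx1 mulmx_diag.
by congr (diag_mx _ *m _); apply/matrixP => i j; rewrite !mxE.
Qed.

Lemma SF_add f g : SF f + SF g = SF (fun k => f k + g k).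
Proof.
rewrite /SF -mulmxDl -mulmxDr -linearD /=; congr (_ *m diag_mx _ *m _).
by apply/matrixP => i j; rewrite !mxE.
Qed.

Lemma SF_scale c f : c *: SF f = SF (fun k => c * f k).
Proof.
rewrite /SF scalemxAl scalemxAr -linearZ /=; congr (_ *m diag_mx _ *m _).
by apply/matrixP => i j; rewrite !mxE.
Qed.

Lemma SF_sub f g : SF f - SF g = SF (fun k => f k - g k).
Proof.
rewrite -scaleN1r SF_scale SF_add; apply: SF_ext => k.
by rewrite mulN1r.
Qed.

Lemma SF0 : SF (fun _ => 0) = 0.
Proof.
rewrite /SF; have -> : (\row_k (0 : CC) : 'rV[CC]_d) = 0 by apply/matrixP => i j; rewrite !mxE.
by rewrite linear0 mulmx0 mul0mx.
Qed.

Lemma SF_sum (I : finType) (F : I -> 'I_d -> CC) :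
  \sum_(i : I) SF (F i) = SF (fun k => \sum_(i : I) F i k).
Proof.
rewrite /SF -mulmx_suml -mulmx_sumr -linear_sum /=; congr (_ *m diag_mx _ *m _).
by apply/matrixP => i j; rewrite !mxE summxE; apply: eq_bigr => k _; rewrite mxE.
Qed.

Lemma SF_sum_ord n (F : 'I_n -> 'I_d -> CC) :
  \sum_(i < n) SF (F i) = SF (fun k => \sum_(i < n) F i k).
Proof. exact: SF_sum. Qed.

Lemma SF_adj f : (SF f)^t* = SF (fun k => conjC (f k)).
Proof.
rewrite /SF !adjM trmxCK mulmxA; congr (_ *m _ *m _).
by rewrite tr_diag_mx map_diag_mx; congr diag_mx; apply/matrixP => i j; rewrite !mxE.
Qed.

Lemma SF_tr f : \tr (SF f) = \sum_k f k.
Proof.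
rewrite /SF mxtrace_mulC mulmxA PU1 mul1mx mxtrace_diag.
by apply: eq_bigr => k _; rewrite mxE.
Qed.

Lemma SF1 : SF (fun _ => 1) = 1%:M.
Proof.
rewrite /SF; have -> : diag_mx (\row_k (1 : CC) : 'rV[CC]_d) = 1%:M.
  by rewrite -diag_const_mx; congr diag_mx; apply/matrixP => i j; rewrite !mxE.
by rewrite mulmx1 PU2.
Qed.

Lemma SF_entry f i j : SF f i j = \sum_k (P^t*) i k * f k * P k j.
Proof.
rewrite /SF mul_mx_diag !mxE; apply: eq_bigr => k _; by rewrite !mxE.
Qed.

End SF.

Lemma cv_bigsum (I : Type) (s : seq I) (u : I -> nat -> R) (l : I -> R) :
  (forall k, Un_cv (u k) (l k)) ->
  Un_cv (fun N => \sum_(k <- s) u k N) (\sum_(k <- s) l k).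
Proof.
move=> h; elim: s => [|x s IH].
  move=> eps heps; exists 0%N => n _; rewrite !big_nil /Rdist.
  by rewrite Rminus_0_r Rabs_R0.
have := CV_plus _ _ _ _ (h x) IH.
move=> H eps heps; have [N HN] := H eps heps; exists N => n hn.
by rewrite !big_cons; exact: HN.
Qed.

Lemma Re_sumR (I : finType) (c : I -> CC) (h : I -> R) :
  complex.Re (\sum_l c l * ((h l)%:C)%C) = \sum_l complex.Re (c l) * h l.
Proof.
apply: (big_rec2 (fun x y => complex.Re x = y)) => // l y1 y2 _ <-.
by case: (c l) => a b; case: y1 => x y /=; rewrite mulr0 subr0.
Qed.

Lemma Im_sumR (I : finType) (c : I -> CC) (h : I -> R) :
  complex.Im (\sum_l c l * ((h l)%:C)%C) = \sum_l complex.Im (c l) * h l.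
Proof.
apply: (big_rec2 (fun x y => complex.Im x = y)) => // l y1 y2 _ <-.
by case: (c l) => a b; case: y1 => x y /=; rewrite mulr0 add0r.
Qed.

Lemma SF_entryR d (P : 'M[CC]_d) (h : 'I_d -> R) i j :
  SF P (fun k => ((h k)%:C)%C) i j = \sum_k ((P^t*) i k * P k j) * ((h k)%:C)%C.
Proof. by rewrite SF_entry; apply: eq_bigr => k _; rewrite mulrAC. Qed.

Lemma M2mxE d A (i j : 'I_d) : M2mx d A i j = toC (A i j).
Proof. by rewrite mxE. Qed.

Lemma exp_cv x : Un_cv (fun N => sum_f_R0 (fun k => Rmult (Rinv (INR (fact k))) (pow x k)) N) (exp x).
Proof. rewrite /exp; case: (exist_exp x) => l h /=; exact: h. Qed.

Section Mexp.
Variable d : nat.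
Variable P : 'M[CC]_d.
Hypothesis PU1 : P *m P^t* = 1%:M.
Hypothesis PU2 : P^t* *m P = 1%:M.

Lemma M2mx_mpow (B : Mat) f : M2mx d B = SF P f ->
  forall k, M2mx d (mpow d B k) = SF P (fun l => f l ^+ k).
Proof.
move=> hB; elim => [|k IH] /=.
  by rewrite M2mx_id -(SF1 PU2); apply: SF_ext => l; rewrite expr0.
by rewrite M2mx_mul IH hB (SF_mul PU1); apply: SF_ext => l; rewrite exprSr.
Qed.

Lemma M2mx_exp_partial (B : Mat) (g : 'I_d -> R) :
  M2mx d B = SF P (fun l => ((g l)%:C)%C) ->
  forall N, M2mx d (exp_partial d B N) =
    SF P (fun l => ((sum_f_R0 (fun k => Rmult (Rinv (INR (fact k))) (pow (g l) k)) N)%:C)%C).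
Proof.
move=> hB N; rewrite /exp_partial M2mx_msumn.
under eq_bigr => k _ do rewrite M2mx_scale (M2mx_mpow hB) toC_RtoC (SF_scale P).
rewrite (SF_sum_ord P); apply: SF_ext => l.
rewrite RealsE big_mkord (@rmorph_sum _ _ (real_complex R)).
apply: eq_bigr => k _; rewrite RpowE -rmorphXn -rmorphM /=.
by [].
Qed.

Lemma Un_cv_ext u v l : (forall n, u n = v n) -> Un_cv v l -> Un_cv u l.
Proof. by move=> h hv eps he; have [N HN] := hv eps he; exists N => n hn; rewrite h; apply: HN. Qed.

Lemma cv_const a : Un_cv (fun _ => a) a.
Proof. move=> eps he; exists 0%N => n _; rewrite /Rdist Rminus_eq_0 Rabs_R0; exact: he. Qed.

Lemma cv_scal a u l : Un_cv u l -> Un_cv (fun n => a * u n) (a * l).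
Proof. move=> h; exact: (CV_mult _ _ _ _ (cv_const a) h). Qed.

Lemma mexp_SF (B : Mat) (g : 'I_d -> R) :
  M2mx d B = SF P (fun l => ((g l)%:C)%C) ->
  M2mx d (mexp d B) = SF P (fun l => ((exp (g l))%:C)%C).
Proof.
move=> hB.
set S := SF P (fun l => ((exp (g l))%:C)%C).
have hcv : forall (i j : 'I_d),
  Un_cv (fun N => Defs.Re (exp_partial d B N i j)) (complex.Re (S i j)) /\
  Un_cv (fun N => Defs.Im (exp_partial d B N i j)) (complex.Im (S i j)).
  move=> i j.
  have hE : forall N, toC (exp_partial d B N i j) =
     SF P (fun l => ((sum_f_R0 (fun k => Rmult (Rinv (INR (fact k))) (pow (g l) k)) N)%:C)%C) i j.
    by move=> N; rewrite -(M2mx_exp_partial hB) M2mxE.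
  split.
  - apply: (@Un_cv_ext _ (fun N => \sum_k complex.Re ((P^t*) i k * P k j) *
        sum_f_R0 (fun k0 => Rmult (Rinv (INR (fact k0))) (pow (g k) k0)) N)).
      by move=> N; rewrite -Re_sumR -SF_entryR -hE.
    rewrite /S SF_entryR Re_sumR.
    apply: cv_bigsum => k; apply: cv_scal; exact: exp_cv.
  - apply: (@Un_cv_ext _ (fun N => \sum_k complex.Im ((P^t*) i k * P k j) *
        sum_f_R0 (fun k0 => Rmult (Rinv (INR (fact k0))) (pow (g k) k0)) N)).
      by move=> N; rewrite -Im_sumR -SF_entryR -hE.
    rewrite /S SF_entryR Im_sumR.
    apply: cv_bigsum => k; apply: cv_scal; exact: exp_cv.
have hM : is_mexp d B (mx2M d S).
  move=> i j hi hj.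
  have := hcv (Ordinal (ltb hi)) (Ordinal (ltb hj)).
  rewrite -{1 2}(mx2MK S) !M2mxE /=.
  by case: (mx2M d S i j).
have hex : exists M, is_mexp d B M by exists (mx2M d S).
have hspec := epsilon_spec (inhabits mzero) (is_mexp d B) hex.
rewrite /mexp; apply/matrixP => i j; rewrite M2mxE.
have [h1 h2] := hspec i j (ordlt i) (ordlt j).
have [h3 h4] := hcv i j.
have e1 := UL_sequence _ _ _ h1 h3.
have e2 := UL_sequence _ _ _ h2 h4.
rewrite /toC e1 e2; by case: (S i j).
Qed.
End Mexp.

Lemma V2cv_scale d c v : V2cv d (fun i => Cmul c (v i)) = toC c *: V2cv d v.
Proof. by apply/matrixP => i j; rewrite !mxE toC_mul. Qed.

Lemma V2cv_fold d (l : list (Defs.C * Vec)) :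
  V2cv d (fun i => fold_right (fun p acc => Cadd (snd p i) acc) Defs.C0 l) =
  \sum_(p <- l) V2cv d (snd p).
Proof.
elim: l => [|p l IH].
  by rewrite big_nil; apply/matrixP => i j; rewrite !mxE.
rewrite big_cons -IH; apply/matrixP => i j; rewrite !mxE /=.
by rewrite toC_add.
Qed.

Lemma col_mulmx d (A B : 'M[CC]_d) j : col j (A *m B) = A *m col j B.
Proof. by apply/matrixP => i k; rewrite !mxE; apply: eq_bigr => l _; rewrite !mxE. Qed.

Lemma mx_cols d (A B : 'M[CC]_d) : (forall j, A *m col j B = col j B) -> A *m B = B.
Proof.
move=> h; apply/matrixP => i j.
have := h j => /matrixP /(_ i 0); rewrite -col_mulmx !mxE.
by [].
Qed.

Lemma diag_eig n (lamv : 'I_n -> R) (m : R) (y : 'cV[CC]_n) k :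
  diag_mx (\row_k ((lamv k)%:C)%C) *m y = ((m%:C)%C) *: y -> y k 0 != 0 -> lamv k = m.
Proof.
move=> /matrixP /(_ k 0); rewrite mul_diag_mx !mxE => /eqP.
rewrite -subr_eq0 -mulrBl mulf_eq0 subr_eq0 => /orP [/eqP /complexI //|/eqP ->].
by rewrite eqxx.
Qed.

Lemma diag_sel n (lamv : 'I_n -> R) (c : 'I_n -> bool) (m : R) (y : 'cV[CC]_n) :
  diag_mx (\row_k ((lamv k)%:C)%C) *m y = ((m%:C)%C) *: y ->
  (forall k, lamv k = m -> c k) -> diag_mx (\row_k ((c k)%:R : CC)) *m y = y.
Proof.
move=> hy hc; apply/matrixP => k j; rewrite ord1 mul_diag_mx !mxE.
case: (eqVneq (y k 0) 0) => [->|hne]; first by rewrite mulr0.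
by rewrite hc ?mul1r //; exact: diag_eig hy hne.
Qed.

Lemma In_filter_seq (T : Type) (c : T -> bool) (s : seq T) x : In x (filter c s) -> c x.
Proof.
elim: s => [//|y s IH] /=; case hy: (c y) => /=.
  by case=> [<- //|/IH].
exact: IH.
Qed.

Section Proj.
Variable d : nat.
Variable H : Mat.
Variable P : 'M[CC]_d.
Variable lam : 'I_d -> R.
Hypothesis PU1 : P *m P^t* = 1%:M.
Hypothesis PU2 : P^t* *m P = 1%:M.
Hypothesis hH : M2mx d H = SF P (fun k => ((lam k)%:C)%C).
Variables a b : R.

Definition chi k : bool := (a < lam k) && (lam k < b).
Definition Ech := SF P (fun k => ((chi k)%:R : CC)).

Lemma eig_diag (m : R) (x : 'cV[CC]_d) : M2mx d H *m x = ((m%:C)%C) *: x ->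
  diag_mx (\row_k ((lam k)%:C)%C) *m (P *m x) = ((m%:C)%C) *: (P *m x).
Proof.
move=> hx.
move: (congr1 (mulmx P) hx); rewrite hH /SF !mulmxA PU1 mul1mx -!mulmxA.
by move=> ->; rewrite scalemxAr.
Qed.

Lemma Ech_fix_eig (mu : Defs.C) (w : Vec) : in_interval a b mu ->
  veq d (mapply d H w) (fun i => Cmul mu (w i)) -> Ech *m V2cv d w = V2cv d w.
Proof.
move=> [hIm [ha hb]] /veqP; rewrite V2cv_apply V2cv_scale.
have -> : toC mu = ((Defs.Re mu)%:C)%C by case: mu hIm ha hb => r i /= ->.
move=> hx; have hy := eig_diag hx.
have hd := diag_sel (c := chi) hy.
have -> : Ech *m V2cv d w = P^t* *m (diag_mx (\row_k ((chi k)%:R : CC)) *m (P *m V2cv d w)).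
  by rewrite /Ech /SF !mulmxA.
rewrite hd.
  by rewrite mulmxA PU2 mul1mx.
move=> k hk; rewrite /chi hk; apply/andP; split; exact/RltP.
Qed.

Lemma Ech_fix_span v : in_eigen_span d H a b v -> Ech *m V2cv d v = V2cv d v.
Proof.
case=> l [hl /veqP ->]; rewrite V2cv_fold.
elim: l hl => [|p l IH] hl; first by rewrite !big_nil mulmx0.
rewrite !big_cons mulmxDr IH; last by move=> q hq; apply: hl; right.
have [h1 h2] := hl p (or_introl erefl).
by rewrite (Ech_fix_eig h1 h2).
Qed.

Lemma H_col k : M2mx d H *m col k (P^t*) = ((lam k)%:C)%C *: col k (P^t*).
Proof.
rewrite -col_mulmx hH /SF -(mulmxA _ P (P^t*)) PU1 mulmx1 mul_mx_diag.
by apply/matrixP => i z; rewrite !mxE mulrC.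
Qed.

Lemma Ech_col_span j : in_eigen_span d H a b (cv2V d (col j Ech)).
Proof.
exists [seq (RtoC (lam k), cv2V d (P k j *: col k (P^t*))) | k <- index_enum 'I_d & chi k].
split.
  move=> p /in_map_iff [k [hp hin]]; have hk := In_filter_seq hin; subst p; split.
    split => //=; move/andP: hk => [/RltP h1 /RltP h2]; split; exact.
  apply/veqP; rewrite V2cv_apply V2cv_scale cv2VK toC_RtoC /=.
  by rewrite -scalemxAr H_col !scalerA mulrC.
apply/veqP; rewrite V2cv_fold cv2VK big_map big_filter.
under eq_bigr => k _ do rewrite /= cv2VK.
apply/matrixP => i z; rewrite ord1 summxE !mxE mul_mx_diag [RHS]big_mkcond /=.
apply: eq_bigr => k _; rewrite !mxE; case: (chi k); rewrite ?mulr1 ?mulr0 ?mul0r //.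
by rewrite mulrC.
Qed.

Lemma Ech_adj : Ech^t* = Ech.
Proof. by rewrite /Ech SF_adj; apply: SF_ext => k; rewrite conjC_nat. Qed.

Lemma proj_SF (Q : Mat) : orth_proj_onto d Q (in_eigen_span d H a b) ->
  M2mx d Q = Ech.
Proof.
move=> [/meqP hQa [/meqP hQQ hS]].
rewrite M2mx_adj in hQa; rewrite M2mx_mul in hQQ.
set Q' := M2mx d Q in hQa hQQ *.
have hfix : forall v, in_eigen_span d H a b v -> Q' *m V2cv d v = V2cv d v.
  by move=> v /hS /veqP; rewrite V2cv_apply.
have h1 : Q' *m Ech = Ech.
  apply: mx_cols => j; have := hfix _ (Ech_col_span j); by rewrite cv2VK.
have h2 : Ech *m Q' = Q'.
  apply: mx_cols => j.
  have hs : in_eigen_span d H a b (cv2V d (col j Q')).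
    by apply/hS/veqP; rewrite V2cv_apply cv2VK -col_mulmx hQQ.
  by have := Ech_fix_span hs; rewrite cv2VK.
by rewrite -hQa -h2 adjM Ech_adj hQa h1.
Qed.
End Proj.

Lemma Re_toC z : complex.Re (toC z) = Defs.Re z. Proof. by []. Qed.

Lemma quad_diag d (c : 'I_d -> R) (y : 'cV[CC]_d) :
  complex.Re ((y^t* *m diag_mx (\row_k ((c k)%:C)%C) *m y) 0 0) =
  \sum_k c k * (complex.Re (y k 0) * complex.Re (y k 0) + complex.Im (y k 0) * complex.Im (y k 0)).
Proof.
rewrite mul_mx_diag mxE.
apply: (big_rec2 (fun x z => complex.Re x = z)) => // k y1 y2 _ <-.
rewrite !mxE; case: (y k 0) => p q; case: y1 => u v /=.
rewrite /GRing.add /GRing.mul /GRing.opp /GRing.zero /=; lra.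
Qed.

Lemma adjMg m n p (A : 'M[CC]_(m, n)) (B : 'M[CC]_(n, p)) : (A *m B)^t* = B^t* *m A^t*.
Proof. by rewrite trmx_mul map_mxM. Qed.

Lemma SF_quad d (Q : 'M[CC]_d) (c : 'I_d -> R) (V : 'cV[CC]_d) :
  complex.Re ((V^t* *m SF Q (fun k => ((c k)%:C)%C) *m V) 0 0) =
  \sum_k c k * (complex.Re ((Q *m V) k 0) * complex.Re ((Q *m V) k 0) +
               complex.Im ((Q *m V) k 0) * complex.Im ((Q *m V) k 0)).
Proof.
rewrite -quad_diag /SF adjMg !mulmxA.
by [].
Qed.

Lemma h1 a : Rle R0 (Rmult a (Rplus (Rmult R1 R1) (Rmult R0 R0))) -> Rle R0 a.
Proof. intro h; nra. Qed.

Lemma h2 a : Rmult a (Rplus (Rmult R0 R0) (Rmult R0 R0)) = R0.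
Proof. ring. Qed.

Lemma sq2_ge0 (a b : R) : Rle 0 (Rplus (Rmult a a) (Rmult b b)).
Proof. nra. Qed.

Lemma abs_sq (a : R) : Rmult (Rabs a) (Rabs a) = Rmult a a.
Proof. rewrite -Rabs_mult Rabs_pos_eq //; nra. Qed.

Lemma sq_eq_abs (y x : R) : Rle 0 y -> Rmult y y = Rmult x x -> y = Rabs x.
Proof.
move=> hy h; have hx := abs_sq x.
have ha := Rabs_pos x.
nra.
Qed.

Lemma diag_sqrt n (yv xv : 'I_n -> R) (W : 'M[CC]_n) :
  (forall k, Rle 0 (yv k)) ->
  diag_mx (\row_k ((yv k * yv k)%:C)%C) *m W = W *m diag_mx (\row_k ((xv k * xv k)%:C)%C) ->
  diag_mx (\row_k ((yv k)%:C)%C) *m W = W *m diag_mx (\row_k ((Rabs (xv k))%:C)%C).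
Proof.
move=> hy hW; apply/matrixP => i j; rewrite mul_diag_mx mul_mx_diag !mxE.
move/matrixP: hW => /(_ i j); rewrite mul_diag_mx mul_mx_diag !mxE.
case: (eqVneq (W i j) 0) => [-> _|hne]; first by rewrite mulr0 mul0r.
move=> h; rewrite [W i j * ((xv j * xv j)%:C)%C]mulrC in h.
have /complexI hsq := mulIf hne h.
by rewrite (sq_eq_abs (hy i) hsq) mulrC.
Qed.

Lemma Re_sum_real (I : finType) (r : I -> R) :
  complex.Re (\sum_k ((r k)%:C)%C) = \sum_k r k.
Proof. by rewrite -(@rmorph_sum _ _ (real_complex R)). Qed.

Lemma trace_norm_SF d (X : Mat) (P : 'M[CC]_d) (x : 'I_d -> R) :
  P *m P^t* = 1%:M -> P^t* *m P = 1%:M ->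
  M2mx d X = SF P (fun k => ((x k)%:C)%C) ->
  trace_norm d X = \sum_k Rabs (x k).
Proof.
move=> PU1 PU2 hX.
have hXX : M2mx d (mmul d (madj X) X) = SF P (fun k => ((x k * x k)%:C)%C).
  rewrite M2mx_mul M2mx_adj hX SF_adj (SF_mul PU1); apply: SF_ext => k.
  by rewrite conjC_real -rmorphM.
pose Pr := fun Y => psd d Y /\ meq d (mmul d Y Y) (mmul d (madj X) X).
have hY0 : Pr (mx2M d (SF P (fun k => ((Rabs (x k))%:C)%C))).
  split; [split|].
  - apply/meqP; rewrite M2mx_adj mx2MK SF_adj; apply: SF_ext => k; exact: conjC_real.
  - move=> v; rewrite -Re_toC toC_vdot V2cv_apply mx2MK mulmxA SF_quad.
    apply/RleP; apply: sumr_ge0 => k _; apply: mulr_ge0; apply/RleP.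
      exact: Rabs_pos.
    exact: sq2_ge0.
  - apply/meqP; rewrite M2mx_mul mx2MK (SF_mul PU1) hXX; apply: SF_ext => k.
    by rewrite -rmorphM /= (abs_sq (x k) : Rabs (x k) * Rabs (x k) = x k * x k).
have hex : exists Y, Pr Y by eexists; exact: hY0.
have [[hYh hYp] hYY] : Pr (mabs d X) := epsilon_spec (inhabits mzero) Pr hex.
set Ym := M2mx d (mabs d X).
have hYa : Ym^t* = Ym by move/meqP: hYh; rewrite M2mx_adj.
have [Q [y [QU1 [QU2 hYe]]]] := spectral_herm hYa.
have hYe' : Ym = SF Q (fun k => ((y k)%:C)%C) := hYe.
have hy0 : forall k, Rle 0 (y k).
  move=> k; have := hYp (cv2V d (col k (Q^t*))).
  rewrite -Re_toC toC_vdot V2cv_apply cv2VK -/Ym hYe' mulmxA SF_quad.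
  rewrite -col_mulmx QU1 (bigD1 k) //= big1 ?addr0.
    rewrite !mxE eqxx /= => h; exact: (h1 h).
  move=> l hl; rewrite !mxE (negPf hl) mulr0n /=; exact: h2.
have hQQ : SF Q (fun k => ((y k * y k)%:C)%C) = SF P (fun k => ((x k * x k)%:C)%C).
  rewrite -hXX; move/meqP: hYY; rewrite M2mx_mul -/Ym hYe' (SF_mul QU1) => <-.
  by apply: SF_ext => k; rewrite -rmorphM.
set W := Q *m P^t*.
have hW : diag_mx (\row_k ((y k * y k)%:C)%C) *m W = W *m diag_mx (\row_k ((x k * x k)%:C)%C).
  have := congr1 (fun M => Q *m M *m P^t*) hQQ; rewrite /SF /= => h.
  rewrite !mulmxA QU1 mul1mx in h.
  rewrite -(mulmxA _ P (P^t*)) PU1 mulmx1 in h.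
  by rewrite /W mulmxA h.
have hW' := diag_sqrt hy0 hW.
have hQ : Q = W *m P by rewrite /W -mulmxA PU2 mulmx1.
have hQW : Q^t* *m W = P^t* by rewrite /W mulmxA QU2 mul1mx.
clearbody W.
have hYP : Ym = SF P (fun k => ((Rabs (x k))%:C)%C).
  rewrite hYe' /SF {2}hQ mulmxA -(mulmxA (Q^t*)) hW' mulmxA hQW.
  by [].
rewrite /trace_norm -Re_toC toC_trace -/Ym hYP (SF_tr PU1).
exact: Re_sum_real.
Qed.

Lemma pair_mc (u v t : R) (c : R) : Rlt 0 t -> Rlt (Rabs u) t -> Rlt (Rabs v) t -> Rlt 0 c ->
  `|c * exp u - c * exp v| <= Rmin (sqrt t) 1 * (c * exp u + c * exp v).
Proof. by move=> ht hu hv hc; apply/RleP; exact: pair_c. Qed.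

Lemma sum_exp_gt0 n (f : 'I_n.+1 -> R) : 0 < \sum_k exp (f k).
Proof.
rewrite big_ord_recl; apply: (@lt_le_trans _ _ (exp (f ord0))).
  exact/RltP/exp_pos.
rewrite lerDl; apply: sumr_ge0 => i _; exact/RleP/Rlt_le/exp_pos.
Qed.

Lemma sum_tv n (g c : 'I_n -> R) (t : R) : Rlt 0 t ->
  (forall j, Rlt (Rabs (c j - g j)) t) ->
  \sum_j `| exp (c j) / (\sum_k exp (c k)) - exp (g j) / (\sum_k exp (g k)) | <= 2 * sqrt t.
Proof.
move=> ht hc.
case: n g c hc => [|n] g c hc.
  by rewrite big_ord0; apply/RleP; exact: twosqrt_ge0.
set A := \sum_k exp (g k); set B := \sum_k exp (c k).
have hA : 0 < A := sum_exp_gt0 g.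
have hB : 0 < B := sum_exp_gt0 c.
set s := Rmin (sqrt t) 1.
have hs : 0 <= s by apply/RleP; exact: Rmin_sq_ge0.
have key : forall j k, `|exp (c j) * exp (g k) - exp (g j) * exp (c k)| <=
    s * (exp (c j) * exp (g k) + exp (g j) * exp (c k)).
  by move=> j k; apply/RleP; exact: pair_exp.
have hterm : forall j, exp (c j) / B - exp (g j) / A =
    (\sum_k (exp (c j) * exp (g k) - exp (g j) * exp (c k))) / (A * B).
  move=> j; rewrite sumrB -!mulr_sumr.
  apply: div_sub_eq; apply/eqP.
  - exact: lt0r_neq0 hA.
  - exact: lt0r_neq0 hB.
have hAB : 0 < A * B by rewrite mulr_gt0.
apply: (@le_trans _ _ (2 * s)); last by apply/RleP; exact: two_s_le.
apply: (@le_trans _ _ (\sum_j (\sum_k s * (exp (c j) * exp (g k) + exp (g j) * exp (c k))) / (A * B))).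
  apply: ler_sum => j _; rewrite hterm normf_div (gtr0_norm hAB).
  rewrite ler_pdivrMr // divfK ?lt0r_neq0 //.
  by apply: (le_trans (ler_norm_sum _ _ _)); apply: ler_sum => k _; exact: key.
rewrite -mulr_suml.
have -> : \sum_j \sum_k s * (exp (c j) * exp (g k) + exp (g j) * exp (c k)) = s * (2 * (A * B)).
  under eq_bigr => j _ do rewrite -mulr_sumr.
  rewrite -mulr_sumr; congr (_ * _).
  under eq_bigr => j _ do rewrite big_split /= -mulr_sumr -mulr_sumr.
  rewrite big_split /= -!mulr_suml -/A -/B.
  by rewrite [B * A]mulrC mulr_natl mulr2n.
by rewrite mulrA mulfK ?lt0r_neq0 // mulrC.
Qed.

Lemma tr_diag_Re d (G : 'M[CC]_d) (x : 'I_d -> R) :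
  complex.Re (\tr (G *m diag_mx (\row_k ((x k)%:C)%C))) = \sum_j complex.Re (G j j) * x j.
Proof.
rewrite mul_mx_diag /mxtrace.
under eq_bigr => j _ do rewrite !mxE.
exact: Re_sumR.
Qed.

Lemma quad_col d (A B : 'M[CC]_d) j :
  ((col j A)^t* *m (B *m col j A)) 0 0 = (A^t* *m (B *m A)) j j.
Proof.
rewrite !mxE; apply: eq_bigr => l _; rewrite !mxE; congr (_ * _).
by apply: eq_bigr => i _; rewrite !mxE.
Qed.

Lemma Re_sum (I : finType) (c : I -> CC) : complex.Re (\sum_i c i) = \sum_i complex.Re (c i).
Proof.
apply: (big_rec2 (fun x y => complex.Re x = y)) => // i y1 y2 _ <-.
by case: (c i) => a b; case: y1.
Qed.

Lemma Re_sub (a b : CC) : complex.Re (a - b) = complex.Re a - complex.Re b.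
Proof. by case: a; case: b. Qed.

Lemma RminusE' (x y : R) : Rminus x y = x - y. Proof. by []. Qed.

Lemma povm_bound d (P : 'M[CC]_d) (x : 'I_d -> R) (m : nat) (F : nat -> Mat) (rho rhot : Mat) :
  P *m P^t* = 1%:M -> P^t* *m P = 1%:M -> povm d m F ->
  M2mx d rhot - M2mx d rho = SF P (fun k => ((x k)%:C)%C) ->
  Rle (Rsum m (fun k => Rabs (Defs.Re (mtrace d (mmul d (F k) rhot)) -
                              Defs.Re (mtrace d (mmul d (F k) rho)))))
      (\sum_j `|x j|).
Proof.
move=> PU1 PU2 [hF hsum] hX.
pose f := fun (k : nat) (j : 'I_d) => complex.Re ((P *m (M2mx d (F k) *m P^t*)) j j).
have hdiff : forall k, Defs.Re (mtrace d (mmul d (F k) rhot)) -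
     Defs.Re (mtrace d (mmul d (F k) rho)) = \sum_j f k j * x j.
  move=> k; rewrite -!Re_toC !toC_trace !M2mx_mul -Re_sub -linearB /= -mulmxBr hX /SF.
  rewrite mulmxA mxtrace_mulC !mulmxA tr_diag_Re.
  by apply: eq_bigr => j _; rewrite /f !mulmxA.
have hf0 : forall k j, (k < m)%N -> 0 <= f k j.
  move=> k j hk; have [_ hp] := hF k (ordlt (Ordinal hk)).
  have := hp (cv2V d (col j (P^t*))).
  rewrite -Re_toC toC_vdot V2cv_apply cv2VK quad_col trmxCK => h.
  exact/RleP.
have hf1 : forall j, \sum_(k < m) f k j = 1.
  move=> j; rewrite /f -Re_sum -summxE -mulmx_sumr -mulmx_suml.
  rewrite -M2mx_msumn.
  move/meqP: hsum => ->; rewrite M2mx_id mul1mx PU1 mxE eqxx /=.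
  by [].
rewrite RsumE; apply/RleP.
under eq_bigr => k _ do rewrite RabsE RminusE' hdiff.
apply: (@le_trans _ _ (\sum_(k < m) \sum_j f k j * `|x j|)).
  apply: ler_sum => k _; apply: (le_trans (ler_norm_sum _ _ _)).
  apply: ler_sum => j _; rewrite normrM ger0_norm //; exact: hf0.
rewrite exchange_big /=; apply: ler_sum => j _.
by rewrite -mulr_suml hf1 mul1r.
Qed.

Lemma collapse n (ch : 'I_n -> bool) (i0 : 'I_n) (f : 'I_n -> R) :
  ch i0 -> (forall i, i != i0 -> ~~ ch i) -> \sum_i (ch i)%:R * f i = f i0.
Proof.
move=> h1 h2; rewrite (bigD1 i0) //= big1 ?addr0; first by rewrite h1 mul1r.
by move=> i hi; rewrite (negPf (h2 i hi)) mul0r.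
Qed.

Lemma RmultE' (x y : R) : Rmult x y = x * y. Proof. by []. Qed.

Lemma nat_complex (b : bool) : ((b%:R : CC)) = (((b%:R : R))%:C)%C.
Proof. by rewrite rmorph_nat. Qed.

Theorem main_thm (d : nat) (H : Mat) (beta eps : R) (d' : nat) (e : nat -> R)
  (Pt : nat -> Mat) :
  Defs.hermitian d H -> Rlt (IZR 0) beta -> Rlt (IZR 0) eps ->
  spectral_covering d H eps d' e ->
  (forall i, (i < d')%coq_nat ->
     orth_proj_onto d (Pt i) (in_eigen_span d H (Rminus (e i) eps) (Rplus (e i) eps))) ->
  let n := fun i => Defs.Re (mtrace d (Pt i)) in
  let Zt := Rsum d' (fun i => Rmult (n i) (exp (Rmult (Ropp beta) (e i)))) in
  let rhot := mscale (RtoC (Rinv Zt))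
                (msumn d' (fun i => mscale (RtoC (exp (Rmult (Ropp beta) (e i)))) (Pt i))) in
  let rho := gibbs d beta H in
  Rle (trace_norm d (msub rhot rho)) (sqrt (Rmult (Rmult (IZR 4) eps) beta)) /\
  (forall (m : nat) (F : nat -> Mat), povm d m F ->
     let p := fun k => Defs.Re (mtrace d (mmul d (F k) rho)) in
     let pt := fun k => Defs.Re (mtrace d (mmul d (F k) rhot)) in
     Rle (Rsum m (fun k => Rabs (Rminus (pt k) (p k)))) (sqrt (Rmult (Rmult (IZR 4) eps) beta))).
Proof.
move=> hH hb he [hc1 [hc2 _]] hPt n Zt rhot rho.
have hHa : (M2mx d H)^t* = M2mx d H by move/meqP: hH; rewrite M2mx_adj.
have [P [lam [PU1 [PU2 hHe]]]] := spectral_herm hHa.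
have hHS : M2mx d H = SF P (fun k => ((lam k)%:C)%C) := hHe.
have heig : forall k : 'I_d, Defs.eigenvalue d H (RtoC (lam k)).
  move=> k; exists (cv2V d (col k (P^t*))); split.
  - apply: NNPP => hn.
    have h0 : V2cv d (cv2V d (col k (P^t*))) = 0.
      apply/matrixP => i j; rewrite [in LHS]mxE [in RHS]mxE.
      have -> : cv2V d (col k (P^t*)) i = Defs.C0.
        apply: NNPP => hne; apply: hn; exists i; split => //; exact: ordlt.
      by [].
    rewrite cv2VK in h0.
    have := congr1 (fun M => (P *m M) k 0) h0.
    rewrite /= mulmx0 -col_mulmx PU1 !mxE eqxx /= => /eqP; rewrite oner_eq0.
    by [].
  - apply/veqP; rewrite V2cv_apply V2cv_scale cv2VK toC_RtoC; exact: (H_col PU1 hHS).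
pose ch := fun (i : 'I_d') (k : 'I_d) => chi lam (Rminus (e i) eps) (Rplus (e i) eps) k.
have hsel : forall k : 'I_d, exists i0 : 'I_d', ch i0 k /\ forall i, i != i0 -> ~~ ch i k.
  move=> k; have [i [hi [_ [h1 h2]]]] := hc1 _ (heig k).
  exists (Ordinal (ltb hi)); split.
    by rewrite /ch /chi /=; apply/andP; split; apply/RltP.
  move=> j hj; apply/negP => /andP [/RltP h3 /RltP h4].
  apply: (hc2 j i (ordlt j) hi _ (lam k)).
    move=> hji; move/eqP: hj; apply; apply: val_inj; exact: hji.
  by split; split.
have hP : forall i : 'I_d', M2mx d (Pt i) = SF P (fun k => ((ch i k)%:R : CC)).
  move=> i; exact: (proj_SF PU1 PU2 hHS (hPt i (ordlt i))).
pose cE := fun k : 'I_d => \sum_(i < d') (ch i k)%:R * e i.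
pose bE := fun k : 'I_d => \sum_(i < d') (ch i k)%:R * exp (Rmult (Ropp beta) (e i)).
have hcE : forall k, Rlt (Rabs (cE k - lam k)) eps.
  move=> k; have [i0 [h0 hn]] := hsel k; rewrite /cE (@collapse _ (fun i => ch i k) i0 (fun i => e i) h0 hn).
  move: h0; rewrite /ch /chi => /andP [/RltP h1 /RltP h2].
  exact: abs_lt_of.
have hbE : forall k, bE k = exp (Rmult (Ropp beta) (cE k)).
  move=> k; have [i0 [h0 hn]] := hsel k.
  by rewrite /bE /cE (@collapse _ (fun i => ch i k) i0 (fun i => exp (Rmult (Ropp beta) (e i))) h0 hn)
     (@collapse _ (fun i => ch i k) i0 (fun i => e i) h0 hn).
have hn : forall i : 'I_d', n i = \sum_k ((ch i k)%:R : R).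
  move=> i; rewrite /n -Re_toC toC_trace hP (SF_tr PU1).
  under eq_bigr => k _ do rewrite nat_complex.
  exact: Re_sum_real.
have hZt : Zt = \sum_k bE k.
  rewrite /Zt RsumE; under eq_bigr => i _ do rewrite RmultE' hn mulr_suml.
  by rewrite exchange_big /=.
have hrt : M2mx d rhot = SF P (fun k => ((Rinv Zt * bE k)%:C)%C).
  rewrite /rhot M2mx_scale M2mx_msumn toC_RtoC.
  under eq_bigr => i _ do rewrite M2mx_scale toC_RtoC hP (SF_scale P).
  rewrite (SF_sum_ord P) (SF_scale P); apply: SF_ext => k.
  rewrite /bE rmorphM (@rmorph_sum _ _ (real_complex R)); congr (_ * _).
  by apply: eq_bigr => i _; rewrite rmorphM nat_complex mulrC.
have hbH : M2mx d (mscale (RtoC (Ropp beta)) H) =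
    SF P (fun k => ((Rmult (Ropp beta) (lam k))%:C)%C).
  by rewrite M2mx_scale hHS (SF_scale P) toC_RtoC; apply: SF_ext => k; rewrite -rmorphM.
have hexp := mexp_SF PU1 PU2 hbH.
have hZ : partition_fn d beta H = \sum_k exp (Rmult (Ropp beta) (lam k)).
  rewrite /partition_fn -Re_toC toC_trace hexp (SF_tr PU1); exact: Re_sum_real.
have hr : M2mx d rho = SF P (fun k =>
    ((Rinv (partition_fn d beta H) * exp (Rmult (Ropp beta) (lam k)))%:C)%C).
  rewrite /rho /gibbs M2mx_scale hexp toC_RtoC (SF_scale P); apply: SF_ext => k.
  by rewrite -rmorphM.
pose x := fun k => Rinv Zt * bE k - Rinv (partition_fn d beta H) * exp (Rmult (Ropp beta) (lam k)).
have hX : M2mx d rhot - M2mx d rho = SF P (fun k => ((x k)%:C)%C).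
  rewrite hrt hr (SF_sub P); apply: SF_ext => k; by rewrite -rmorphB.
have hsum : \sum_k `|x k| <= 2 * sqrt (beta * eps).
  have := @sum_tv _ (fun k => Rmult (Ropp beta) (lam k)) (fun k => Rmult (Ropp beta) (cE k))
     (beta * eps) (tpos _ _ he hb) (fun j => scale_bound _ _ _ _ hb (hcE j)).
  congr (_ <= _); apply: eq_bigr => k _; congr `|_|.
  rewrite /x hZt hZ; under [in RHS]eq_bigr => j _ do rewrite hbE.
  rewrite [in RHS]hbE [Rinv _ * exp _]mulrC [Rinv _ * exp _]mulrC.
  by [].
have hfin : Rle (\sum_k Rabs (x k)) (sqrt (Rmult (Rmult (IZR 4) eps) beta)).
  rewrite -(sqrt4' _ _ he hb); apply/RleP; apply: (le_trans hsum).
  by rewrite mulr2n.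
split.
  have hXm : M2mx d (msub rhot rho) = SF P (fun k => ((x k)%:C)%C) by rewrite M2mx_sub hX.
  by rewrite (trace_norm_SF PU1 PU2 hXm).
move=> m F hF p pt.
have := povm_bound PU1 PU2 hF hX.
move=> h; apply: (Rle_trans _ _ _ h).
exact: hfin.
Qed.


Theorem theorem3p3 (d : nat) (H : Mat) (beta eps : R) (d' : nat) (e : nat -> R)
  (Pt : nat -> Mat) :
  Defs.hermitian d H -> Rlt (IZR 0) beta -> Rlt (IZR 0) eps ->
  spectral_covering d H eps d' e ->
  (forall i, (i < d')%coq_nat ->
     orth_proj_onto d (Pt i) (in_eigen_span d H (Rminus (e i) eps) (Rplus (e i) eps))) ->
  let n := fun i => Defs.Re (mtrace d (Pt i)) in
  let Zt := Rsum d' (fun i => Rmult (n i) (exp (Rmult (Ropp beta) (e i)))) in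
  let rhot := mscale (RtoC (Rinv Zt))
                (msumn d' (fun i => mscale (RtoC (exp (Rmult (Ropp beta) (e i)))) (Pt i))) in
  let rho := gibbs d beta H in
  Rle (trace_norm d (msub rhot rho)) (sqrt (Rmult (Rmult (IZR 4) eps) beta)) /\
  (forall (m : nat) (F : nat -> Mat), povm d m F ->
     let p := fun k => Defs.Re (mtrace d (mmul d (F k) rho)) in
     let pt := fun k => Defs.Re (mtrace d (mmul d (F k) rhot)) in
     Rle (Rsum m (fun k => Rabs (Rminus (pt k) (p k)))) (sqrt (Rmult (Rmult (IZR 4) eps) beta))).
Proof. exact: main_thm. Qed.
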